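(* Assume $\mathrm{recc}(C)\subseteq\mathrm{recc}(P^B)$. Fix $k\in N_2$ and assume $N_0\not\subseteq J$. Fix $\hat x\in P^B$. Then the set function $g:2^{M'}\to\mathbb{R}$, $$g(S)=\sum_{i\in S}\hat x_i-\sum_{j\in N\setminus J}\frac{\hat x_j}{\varepsilon'_j(S)},$$ is supermodular. Hence $\max_{S\subseteq M'}g(S)$ is a supermodular maximization problem.
   Context: Let $A\in\mathbb{R}^{m\times n}$ have full row rank, $b\in\mathbb{R}^m$, and $P=\{x\in\mathbb{R}^n_+:Ax=b\}$. Let $C\subseteq\mathbb{R}^n$ be an open convex set. Fix a basis $B$ of $P$ with nonbasic set $N=\{1,\dots,n\}\setminus B$. Write $P=\{x:x_i=\bar b_i-\sum_{j\in N}\bar a_{ij}x_j\ (i\in B),\ x\ge0\}$ with $\bar b\ge0$. The basic solution $\bar x$ has $\bar x_i=\bar b_i$ ($i\in B$) and $0$ ($i\in N$). $P^B$ is obtained by dropping $x_i\ge0$ for $i\in B$. For $j\in N$, $\bar r^j$ has $\bar r^j_k=-\bar a_{kj}$ ($k\in B$), $\bar r^j_j=1$, and $0$ otherwise. Thus $P^B=\{\bar x+\sum_{j\in N}x_j\bar r^j:x_j\ge0\}$. It is assumed that $\bar x\notin\mathrm{cl}(C)$. For $j\in N$, $\alpha_j=\inf\{\lambda\ge0:\bar x+\lambda\bar r^j\in C\}$ and $\beta_j=\sup\{\lambda\ge0:\bar x+\lambda\bar r^j\in C\}$, with $\alpha_j=+\infty$, $\beta_j=-\infty$ if the halfline misses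 $C$. Define - $N_0=\{j:\alpha_j=+\infty,\beta_j=-\infty\}$; - $N_2=\{j:\alpha_j\in(0,\infty),\beta_j\in(\alpha_j,\infty)\}$. For a set $K$, $\mathrm{recc}(K)=\{d:x+\lambda d\in K\ \forall x\in K,\lambda\ge0\}$. We use the convention $t/+\infty=0$. For $k\in N_2$, $S_k^C=\{\bar x\}+\mathrm{conv}\big(\bigcup_{j\in N_2}\{\lambda\bar r^j:0\le\lambda<\beta_j\}\big)+\{\lambda\bar r^k:\lambda\le0\}+\mathrm{recc}(C)$. Let $J=\{i\in N:\bar r^i\in\mathrm{recc}(S_k^C)\}$. For $i\in J$, $j\in N\setminus J$, $\gamma'_{ij}=\sup\{\gamma\ge0:\bar r^i+\gamma\bar r^j\in\mathrm{recc}(S_k^C)\}$. Let $M'=\{i\in J:\gamma'_{ij}>0\ \forall j\in N\setminus J\}$. Finally, $\varepsilon'_j(S)=\min_{i\in S}\gamma'_{ij}$ for $S\ne\emptyset$ and $\varepsilon'_j(\emptyset)=+\infty$. *)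

(* Defs.v *)
From HB Require Import structures.
From mathcomp Require Import all_boot all_order all_algebra.
From mathcomp Require Import all_classical all_reals.
From mathcomp Require Import ereal topology normedtype.
Set Implicit Arguments. Unset Strict Implicit. Unset Printing Implicit Defensive.
Import Order.TTheory GRing.Theory Num.Theory.
Import numFieldNormedType.Exports.
Local Open Scope classical_set_scope.
Local Open Scope ring_scope.
Local Open Scope ereal_scope.
Local Open Scope ring_scope.

(* Vectors of R^n are column vectors 'cV[R]_n; coordinate i of x is x i 0. *)
Section Defs.
Variables (R : realType) (n : nat).
Notation vec := 'cV[R]_n.

Definition convexS (K : set vec) : Prop :=
  forall x y (t : R), K x -> K y -> 0 <= t -> t <= 1 -> K (t *: x + (1 - t) *: y).

Definition recc (K : set vec) : set vec :=
  [set d | forall x, K x -> forall lam : R, 0 <= lam -> K (x + lam *: d)].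

Definition conv (K : set vec) : set vec :=
  [set x | exists (p : nat) (w : 'I_p -> R) (a : 'I_p -> vec),
     [/\ (forall i, 0 <= w i), \sum_(i < p) w i = 1, (forall i, K (a i))
       & x = \sum_(i < p) w i *: a i]].

Definition msum (K L : set vec) : set vec :=
  [set z | exists x y, [/\ K x, L y & z = x + y]].

Definition PB (B : {set 'I_n}) (xbar : vec) (rbar : 'I_n -> vec) : set vec :=
  [set x | exists lam : 'I_n -> R, (forall j, j \notin B -> 0 <= lam j) /\
     x = xbar + \sum_(j | j \notin B) lam j *: rbar j].

(* alpha_j = inf {lambda >= 0 : xbar + lambda rbar^j in C} (inf of empty = +oo)
   beta_j  = sup {lambda >= 0 : xbar + lambda rbar^j in C} (sup of empty = -oo) *)
Definition alpha (C : set vec) (xbar : vec) (rbar : 'I_n -> vec) (j : 'I_n)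
  : \bar R :=
  ereal_inf [set (lam%:E) | lam in [set lam : R | 0 <= lam /\ C (xbar + lam *: rbar j)]].
Definition beta (C : set vec) (xbar : vec) (rbar : 'I_n -> vec) (j : 'I_n)
  : \bar R :=
  ereal_sup [set (lam%:E) | lam in [set lam : R | 0 <= lam /\ C (xbar + lam *: rbar j)]].

Definition N0 (C : set vec) (B : {set 'I_n}) (xbar : vec) (rbar : 'I_n -> vec) : {set 'I_n} :=
  [set j | (j \notin B) && `[< alpha C xbar rbar j = +oo%E /\ beta C xbar rbar j = -oo%E >]].

Definition N2 (C : set vec) (B : {set 'I_n}) (xbar : vec) (rbar : 'I_n -> vec) : {set 'I_n} :=
  [set j | (j \notin B) && `[< [/\ (0 < alpha C xbar rbar j)%E,
                                  (alpha C xbar rbar j < +oo)%E,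
                                  (alpha C xbar rbar j < beta C xbar rbar j)%E &
                                  (beta C xbar rbar j < +oo)%E] >]].

Definition SkC (C : set vec) (B : {set 'I_n}) (xbar : vec) (rbar : 'I_n -> vec) (k : 'I_n) : set vec :=
  msum (msum (msum [set xbar]
    (conv [set y | exists j, j \in N2 C B xbar rbar /\
             exists lam : R, [/\ 0 <= lam, (lam%:E < beta C xbar rbar j)%E
                              & y = lam *: rbar j]]))
    [set y | exists lam : R, lam <= 0 /\ y = lam *: rbar k])
    (recc C).

Definition Jset (C : set vec) (B : {set 'I_n}) (xbar : vec) (rbar : 'I_n -> vec) k : {set 'I_n} :=
  [set i | (i \notin B) && `[< recc (SkC C B xbar rbar k) (rbar i) >]].

Definition gamma' (C : set vec) (B : {set 'I_n}) (xbar : vec) (rbar : 'I_n -> vec) k (i j : 'I_n) : \bar R :=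
  ereal_sup [set (g%:E) | g in [set g : R | 0 <= g /\
                recc (SkC C B xbar rbar k) (rbar i + g *: rbar j)]].

Definition NJ (C : set vec) (B : {set 'I_n}) (xbar : vec) (rbar : 'I_n -> vec) k : {set 'I_n} :=
  [set j | (j \notin B) && (j \notin Jset C B xbar rbar k)].

Definition M' (C : set vec) (B : {set 'I_n}) (xbar : vec) (rbar : 'I_n -> vec) k : {set 'I_n} :=
  [set i in Jset C B xbar rbar k |
     `[< forall j, j \in NJ C B xbar rbar k -> (0 < gamma' C B xbar rbar k i j)%E >]].

(* epsilon'_j(S) = min_{i in S} gamma'_{ij}, and +oo for S empty *)
Definition eps' (C : set vec) (B : {set 'I_n}) (xbar : vec) (rbar : 'I_n -> vec) k (S : {set 'I_n}) (j : 'I_n) : \bar R :=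
  \big[Order.min/+oo%E]_(i in S) gamma' C B xbar rbar k i j.

(* t / e with the convention t / +oo = 0 *)
Definition divE (t : R) (e : \bar R) : R :=
  if e is r%:E then t / r else 0.

Definition gfun (C : set vec) (B : {set 'I_n}) (xbar : vec) (rbar : 'I_n -> vec) k (xhat : vec) (S : {set 'I_n}) : R :=
  \sum_(i in S) xhat i 0
  - \sum_(j in NJ C B xbar rbar k) divE (xhat j 0) (eps' C B xbar rbar k S j).

End Defs.

Definition supermodular_on (n : nat) (R : realType) (M : {set 'I_n})
  (g : {set 'I_n} -> R) : Prop :=
  forall S T : {set 'I_n}, S \subset M -> T \subset M ->
    g S + g T <= g (S :|: T) + g (S :&: T).

(* Main.v *)
Require Import Defs.
From HB Require Import structures.
From mathcomp Require Import all_boot all_order all_algebra.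
From mathcomp Require Import all_classical all_reals.
From mathcomp Require Import ereal topology normedtype.
From mathcomp Require Import lra.
Import Order.TTheory GRing.Theory Num.Theory.
Import numFieldNormedType.Exports.
Local Open Scope classical_set_scope.
Local Open Scope ring_scope.

Section Helpers.
Variable R : realType.

Lemma divE_anti (x : R) (e1 e2 : \bar R) : 0 <= x ->
  (0 < e1)%E -> (e1 <= e2)%E -> divE x e2 <= divE x e1.
Proof.
move=> x0; case: e1 => [r1| |] //=; case: e2 => [r2| |] //=.
- rewrite !lte_fin lee_fin => r10 r12.
  apply: ler_wpM2l => //; rewrite lef_pV2 ?posrE //; lra.
- by rewrite lte_fin => r10 _; apply: divr_ge0 => //; apply/ltW.
Qed.

Lemma divE_minmax (x : R) (a b : \bar R) :
  divE x (Order.min a b) + divE x (Order.max a b) = divE x a + divE x b.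
Proof.
rewrite /Order.min /Order.max; case: ifP => _ //; by rewrite addrC.
Qed.

Lemma bigmin_lb (I : finType) (S : {set I}) (F : I -> \bar R) i :
  i \in S -> (\big[Order.min/+oo%E]_(j in S) F j <= F i)%E.
Proof.
move=> iS; by rewrite (bigD1 i) //= ge_min lexx.
Qed.

Lemma bigmin_glb (I : finType) (S : {set I}) (F : I -> \bar R) c :
  (forall i, i \in S -> (c <= F i)%E) ->
  (c <= \big[Order.min/+oo%E]_(j in S) F j)%E.
Proof.
move=> H; apply: (big_ind (fun y => (c <= y)%E)) => //.
- exact: leey.
- by move=> y z cy cz; rewrite le_min cy cz.
Qed.

Lemma bigmin_gt (I : finType) (S : {set I}) (F : I -> \bar R) c :
  (c < +oo)%E -> (forall i, i \in S -> (c < F i)%E) ->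
  (c < \big[Order.min/+oo%E]_(j in S) F j)%E.
Proof.
move=> cy H; apply: (big_ind (fun y => (c < y)%E)) => //.
by move=> y z cy' cz; rewrite lt_min cy' cz.
Qed.
End Helpers.

Theorem proposition9 (R : realType) (m n : nat)
  (A : 'M[R]_(m, n)) (b : 'cV[R]_m) (C : set 'cV[R]_n)
  (B : {set 'I_n}) (xbar : 'cV[R]_n) (rbar : 'I_n -> 'cV[R]_n)
  (k : 'I_n) (xhat : 'cV[R]_n) :
  (* A has full row rank *)
  \rank A = m ->
  (* C is open and convex *)
  open C -> convexS C ->
  (* B is a basis: #|B| = m and the columns of A indexed by B are independent *)
  #|B| = m ->
  (forall y : 'cV[R]_n, (forall j, j \notin B -> y j 0 = 0) -> A *m y = 0 -> y = 0) ->
  (* xbar is the basic solution, which is feasible (bbar >= 0) *)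
  A *m xbar = b -> (forall j, j \notin B -> xbar j 0 = 0) ->
  (forall i, i \in B -> 0 <= xbar i 0) ->
  (* rbar^j : A rbar^j = 0, (rbar^j)_j = 1, (rbar^j)_l = 0 for other nonbasic l *)
  (forall j, j \notin B -> A *m rbar j = 0 /\
     forall l, l \notin B -> rbar j l 0 = (l == j)%:R) ->
  (* xbar not in cl(C) *)
  ~ closure C xbar ->
  (* recc(C) subset of recc(P^B) *)
  recc C `<=` recc (PB B xbar rbar) ->
  k \in N2 C B xbar rbar ->
  ~~ (N0 C B xbar rbar \subset Jset C B xbar rbar k) ->
  PB B xbar rbar xhat ->
  supermodular_on (M' C B xbar rbar k) (gfun C B xbar rbar k xhat).
Proof.
move=> _ _ _ _ _ _ xbar0 _ hr _ _ _ _ [lam [lam0 ->]] S T SM TM.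
set xh := xbar + _.
have xh0 : forall j, j \notin B -> 0 <= xh j 0.
  move=> j jB; rewrite /xh mxE xbar0 // add0r summxE.
  apply: sumr_ge0 => l lB; rewrite mxE; apply: mulr_ge0; first exact: lam0.
  by rewrite (proj2 (hr l lB)) // ler0n.
have gpos : forall U : {set 'I_n}, U \subset M' C B xbar rbar k ->
    forall j, j \in NJ C B xbar rbar k ->
    (0 < eps' C B xbar rbar k U j)%E.
  move=> U UM j jN; apply: bigmin_gt => // i iU.
  have := fintype.subsetP UM i iU; rewrite inE => /andP[_ /asboolP H]; exact: H.
have sumeq : \sum_(i in S) xh i 0 + \sum_(i in T) xh i 0 =
    \sum_(i in S :|: T) xh i 0 + \sum_(i in S :&: T) xh i 0.
  rewrite (big_setID (A:=S :|: T) S) finset.setUK finset.setDUl finset.setDv finset.set0U.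
  rewrite (big_setID (A:=T) S) finset.setIC /=; lra.
have SUM : S :|: T \subset M' C B xbar rbar k by rewrite finset.subUset SM.
have SIM : S :&: T \subset M' C B xbar rbar k.
  by apply: fintype.subset_trans SM; apply: finset.subsetIl.
rewrite /gfun.
suff : \sum_(j in NJ C B xbar rbar k)
    (divE (xh j 0) (eps' C B xbar rbar k (S :|: T) j) +
     divE (xh j 0) (eps' C B xbar rbar k (S :&: T) j)) <=
  \sum_(j in NJ C B xbar rbar k)
    (divE (xh j 0) (eps' C B xbar rbar k S j) +
     divE (xh j 0) (eps' C B xbar rbar k T j)).
  rewrite !big_split /=; lra.
apply: ler_sum => j jN.
have jB : j \notin B by move: jN; rewrite inE => /andP[].
have x0 := xh0 j jB.
rewrite -(@divE_minmax R (xh j 0) (eps' C B xbar rbar k S j)).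
have gS := gpos S SM j jN; have gT := gpos T TM j jN.
apply: lerD; apply: divE_anti => //.
- by rewrite lt_min gS gT.
- apply: bigmin_glb => i; rewrite inE => /orP[] iS.
  + by rewrite ge_min bigmin_lb.
  + by rewrite ge_min orbC bigmin_lb.
- by rewrite lt_max gS gT.
- rewrite ge_max; apply/andP; split; apply: bigmin_glb => i;
    rewrite inE => /andP[iS iT]; exact: bigmin_lb.
Qed.
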